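(* Let $r\le p$ be positive integers with $p$ prime, and let $S\subseteq\{0,\dots,p-1\}$ with $|S|=k$. If $S$ does not contain an $r$-weighted arithmetic progression modulo $p$, then the code $\mathcal{C}(r,p,S)$ is an $(r,k)$-batch code of dimension $rp$.
   Context: Array construction: let $n=rp$ and $S=\{s_0<\dots<s_{k-1}\}\subseteq\{0,\dots,p-1\}$. For $s,t\in\{0,\dots,p-1\}$ let $D_{s,t}=\{(i,\langle t+is\rangle_p): i=0,\dots,r-1\}$, where $\langle x\rangle_p=x\bmod p$. An information vector $\boldsymbol{x}\in\{0,1\}^n$ is written as an array $(x_{i,j})$, $(i,j)\in\{0,\dots,r-1\}\times\{0,\dots,p-1\}$, and redundancy bits $\rho_{\ell,t}=\sum_{(i,j)\in D_{s_\ell,t}}x_{i,j}\pmod2$ are added for $\ell\in\{0,\dots,k-1\}$, $t\in\{0,\dots,p-1\}$; $\mathcal{C}(r,p,S)$ is the binary code of all words $(\boldsymbol{x},(\rho_{\ell,t}))$. The set $S$ contains no $r$-weighted arithmetic progression modulo $p$ if there do not exist pairwise distinct $s_1,s_2,s_3\in S$ and integers $0<x,y<r-1$ with $x+y<r$ such that $xs_1+ys_2\equiv(x+y)s_3\pmod p$. A binary linear code encoding $n$ information bits is an $(r,k)$-batch code if for every multiset $\{i_1,\dots,i_k\}$ of information indices there exist $k$ mutually disjoint sets $R_1,\dots,R_k$ of coordinates, each of size at most $r$, such that $x_{i_j}$ is a function of the codeword bits indexed by $R_j$. *)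

(* Defs.v *)
From HB Require Import structures.
From mathcomp Require Import all_boot all_order all_algebra.
Unset Printing Implicit Defensive.
Import GRing.Theory.
Local Open Scope ring_scope.

(* It is an (r,k)-batch code
   if for every k-multiset (given as a k-tuple) of information indices there
   are k pairwise disjoint coordinate sets R_j, each of size <= r, such that
   the j-th requested information bit is a function of the codeword bits
   indexed by R_j (the function g only sees the coordinates in R_j). *)
Definition is_batch_code (I C : finType)
    (enc : {ffun I -> 'F_2} -> {ffun C -> 'F_2}) (r k : nat) : Prop :=
  forall req : 'I_k -> I,
    exists R : 'I_k -> {set C},
      (forall j1 j2 : 'I_k, j1 != j2 -> [disjoint R j1 & R j2]) /\
      (forall j : 'I_k, (#|R j| <= r)%N) /\
      (forall j : 'I_k, exists g : (C -> 'F_2) -> 'F_2,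
         forall x : {ffun I -> 'F_2},
           g (fun c => if c \in R j then enc x c else 0) = x (req j)).

(* Information coordinates: (i,j) in [r]x[p];
   redundancy coordinates: (l,t) in [k]x[p] with k = |S|; s_l is the l-th
   smallest element of S (enum of a set of ordinals is increasing). *)
Definition info_idx (r p : nat) : finType := ('I_r * 'I_p)%type.
Definition code_coord (r p : nat) (S : {set 'I_p}) : finType :=
  (('I_r * 'I_p) + ('I_#|S| * 'I_p))%type.

Definition rho (r p : nat) (S : {set 'I_p}) (x : {ffun info_idx r p -> 'F_2})
    (l : 'I_#|S|) (t : 'I_p) : 'F_2 :=
  \sum_(i < r) \sum_(j < p | nat_of_ord j == ((t + i * enum_val l) %% p)%N)
      x (i, j).

Definition enc_arr (r p : nat) (S : {set 'I_p})
    (x : {ffun info_idx r p -> 'F_2}) : {ffun code_coord r p S -> 'F_2} :=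
  [ffun c => match c with
             | inl ij => x ij
             | inr lt => @rho r p S x lt.1 lt.2
             end].

Definition arr_code (r p : nat) (S : {set 'I_p}) : {set {ffun code_coord r p S -> 'F_2}} :=
  [set @enc_arr r p S x | x : {ffun info_idx r p -> 'F_2}].

Definition no_weighted_AP (r p : nat) (S : {set 'I_p}) : Prop :=
  ~ exists (s1 s2 s3 : 'I_p) (x y : nat),
      [/\ [&& s1 \in S, s2 \in S & s3 \in S],
          [&& s1 != s2, s1 != s3 & s2 != s3],
          [&& (0 < x)%N, (x < r - 1)%N, (0 < y)%N, (y < r - 1)%N & (x + y < r)%N]
        & ((x * s1 + y * s2) %% p = ((x + y) * s3) %% p)%N].

(* Main.v *)
Require Import Defs.
From mathcomp Require Import all_boot all_order all_algebra.
From mathcomp Require Import zify ring.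
Import GRing.Theory.

Set Implicit Arguments.
Unset Strict Implicit.
Section Geo.
Local Open Scope ring_scope.
Variables (r p : nat) (S : {set 'I_p}).
Hypothesis hp : prime p.
Hypothesis hrp : (r <= p)%N.

Notation cell := ('I_r * 'I_p)%type.
Definition rw (P : cell) : 'F_p := (P.1 : nat)%:R.
Definition cl (P : cell) : 'F_p := (P.2 : nat)%:R.
Definition lineF (X Y : cell) (s : 'I_p) : bool :=
  cl Y - cl X == (rw Y - rw X) * (s : nat)%:R.
Definition onl (P : cell) (s t : 'I_p) : bool := (P.2 : nat) == ((t + P.1 * s) %% p)%N.

Lemma p_gt0 : (0 < p)%N. Proof. exact: prime_gt0. Qed.

Definition t_of (c : cell) (s : 'I_p) : 'I_p :=
  Ordinal (ltn_pmod (c.2 + (p - (c.1 * s) %% p)) p_gt0).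

Lemma natF_eq (a b : nat) : ((a%:R : 'F_p) == b%:R) = (a %% p == b %% p)%N.
Proof.
apply/eqP/eqP => [H|H].
  by rewrite -!(val_Fp_nat hp) H.
by rewrite -(Fp_nat_mod hp) H Fp_nat_mod.
Qed.

Lemma natF_inj (a b : nat) : (a < p)%N -> (b < p)%N -> (a%:R : 'F_p) = b%:R -> a = b.
Proof.
move=> ha hb /eqP; rewrite natF_eq !modn_small //; by move/eqP.
Qed.

Lemma cell_eq (P Q : cell) : rw P = rw Q -> cl P = cl Q -> P = Q.
Proof.
case: P => i j; case: Q => i' j'; rewrite /rw /cl /= => h1 h2.
have e1 : i = i' :> nat by apply: natF_inj => //; apply: leq_trans hrp.
have e2 : j = j' :> nat by apply: natF_inj.
by rewrite (val_inj e1) (val_inj e2).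
Qed.

Lemma onlE (P : cell) (s t : 'I_p) : onl P s t = (cl P == (t : nat)%:R + rw P * (s : nat)%:R).
Proof.
rewrite /onl /cl /rw -natrM -natrD natF_eq (modn_small (ltn_ord _)).
by [].
Qed.

Lemma t_ofE (c : cell) (s : 'I_p) : ((t_of c s : nat)%:R : 'F_p) = cl c - rw c * (s : nat)%:R.
Proof.
rewrite /t_of /= Fp_nat_mod // natrD natrB; last by apply: ltnW; apply: ltn_pmod p_gt0.
by rewrite (pchar_Fp_0 hp) Fp_nat_mod // natrM /cl /rw; ring.
Qed.

Lemma onl_t (c P : cell) (s : 'I_p) : onl P s (t_of c s) = lineF c P s.
Proof.
rewrite onlE t_ofE /lineF; apply/eqP/eqP => H.
  by rewrite H; ring.
by rewrite -(subrK (cl c) (cl P)) H; ring.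
Qed.

Lemma lineF_refl X s : lineF X X s.
Proof. by rewrite /lineF !subrr mul0r. Qed.

Lemma lineF_sym X Y s : lineF X Y s = lineF Y X s.
Proof.
rewrite /lineF; apply/eqP/eqP => H.
  by rewrite -opprB H -mulNr opprB.
by rewrite -opprB H -mulNr opprB.
Qed.

Lemma lineF_trans X Y Z s : lineF X Y s -> lineF Y Z s -> lineF X Z s.
Proof.
rewrite /lineF => /eqP H1 /eqP H2; apply/eqP.
by rewrite -(subrKA (cl Y)) addrC H1 H2; ring.
Qed.

Lemma pencil c P (s1 s2 : 'I_p) : s1 != s2 -> lineF c P s1 -> lineF c P s2 -> P = c.
Proof.
rewrite /lineF => hs /eqP H1 /eqP H2.
have : (rw P - rw c) * ((s1 : nat)%:R - (s2 : nat)%:R) = 0.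
  by rewrite mulrBr -H1 -H2 subrr.
move/eqP; rewrite mulf_eq0 => /orP [|].
  rewrite subr_eq0 => /eqP hr; apply: cell_eq => //.
  by apply/eqP; rewrite -subr_eq0 H1 hr subrr mul0r.
rewrite subr_eq0 => /eqP h; exfalso; move/negP: hs; apply; apply/eqP/val_inj.
exact: natF_inj (ltn_ord _) (ltn_ord _) h.
Qed.

Lemma row_neq X Y s : lineF X Y s -> X != Y -> (X.1 : nat) != Y.1.
Proof.
rewrite /lineF => /eqP H hXY; apply/negP => /eqP e; move/negP: hXY; apply; apply/eqP.
have e1 : rw X = rw Y by rewrite /rw e.
apply: cell_eq => //; apply/eqP; rewrite eq_sym -subr_eq0 H e1 subrr mul0r //.
Qed.

Lemma tri_sorted (X Y Z : cell) (a b c : 'I_p) :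
  (X.1 < Y.1)%N -> (Y.1 < Z.1)%N -> lineF X Y a -> lineF Y Z b -> lineF X Z c ->
  a \in S -> b \in S -> c \in S -> a != b -> a != c -> b != c ->
  no_weighted_AP r p S -> False.
Proof.
move=> h1 h2 /eqP l1 /eqP l2 /eqP l3 ha hb hc hab hac hbc nap; apply: nap.
exists a, b, c, (Y.1 - X.1)%N, (Z.1 - Y.1)%N.
have hz := ltn_ord Z.1.
split.
- by rewrite ha hb hc.
- by rewrite hab hac hbc.
- apply/and5P; split; lia.
- apply/eqP; rewrite -natF_eq natrD !natrM !natrB; try by apply: ltnW.
  rewrite /rw /cl in l1 l2 l3.
  rewrite -l1 -l2 (_ : (Y.1 - X.1 + (Z.1 - Y.1) = Z.1 - X.1)%N); last lia.
  rewrite natrB; last by apply: ltnW; apply: ltn_trans h2.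
  by rewrite -l3; apply/eqP; ring.
Qed.

Lemma tri (X Y Z : cell) (a b c : 'I_p) :
  X != Y -> Y != Z -> X != Z -> lineF X Y a -> lineF Y Z b -> lineF X Z c ->
  a \in S -> b \in S -> c \in S -> a != b -> a != c -> b != c ->
  no_weighted_AP r p S -> False.
Proof.
move=> nXY nYZ nXZ lXY lYZ lXZ ha hb hc hab hac hbc nap.
have r1 := row_neq lXY nXY; have r2 := row_neq lYZ nYZ; have r3 := row_neq lXZ nXZ.
have hba : b != a by rewrite eq_sym.
have hca : c != a by rewrite eq_sym.
have hcb : c != b by rewrite eq_sym.
have lYX : lineF Y X a by rewrite lineF_sym.
have lZY : lineF Z Y b by rewrite lineF_sym.
have lZX : lineF Z X c by rewrite lineF_sym.
case: (ltngtP X.1 Y.1) r1 => // o1 _; case: (ltngtP Y.1 Z.1) r2 => // o2 _;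
  case: (ltngtP X.1 Z.1) r3 => // o3 _.
- exact: (tri_sorted o1 o2 lXY lYZ lXZ).
- by move: o1 o2 o3; clear; lia.
- exact: (tri_sorted o3 o2 lXZ lZY lXY).
- exact: (tri_sorted o3 o1 lZX lXY lZY).
- exact: (tri_sorted o1 o3 lYX lXZ lYZ).
- exact: (tri_sorted o2 o3 lYZ lZX lYX).
- by move: o1 o2 o3; clear; lia.
- exact: (tri_sorted o2 o1 lZY lYX lZX).
Qed.

Definition slope (l : 'I_#|S|) : 'I_p := enum_val l.

Lemma slope_in l : slope l \in S. Proof. exact: enum_valP. Qed.

Lemma slope_neq l1 l2 : l1 != l2 -> slope l1 != slope l2.
Proof. by apply: contra => /eqP /enum_val_inj ->. Qed.

Definition lineset (c : cell) (l : 'I_#|S|) : {set code_coord r p S} :=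
  inr (l, t_of c (slope l)) |:
  [set (@inl cell ('I_#|S| * 'I_p) P) | P in [set P : cell | lineF c P (slope l) & P != c]].

Lemma mem_lineset c l (z : code_coord r p S) : (z \in lineset c l) =
  match z with inl P => lineF c P (slope l) && (P != c)
             | inr m => m == (l, t_of c (slope l)) end.
Proof.
rewrite !inE; case: z => [P|m] /=.
  rewrite mem_imset; last by move=> x y [].
  by rewrite inE.
have -> : (inr m \in [set (@inl cell (_ * _) P) | P : cell & lineF c P (slope l) && (P != c)]) = false.
  by apply/negbTE/negP => /imsetP [x _].
by rewrite orbF.
Qed.

Lemma disjW (T : finType) (A B : {set T}) :
  (forall z, z \in A -> z \in B -> False) -> [disjoint A & B].
Proof.
move=> H; rewrite -setI_eq0; apply/eqP/setP => z; rewrite inE in_set0.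
by apply/negP => /andP [h1 h2]; apply: (H z).
Qed.

Lemma ndisjE (T : finType) (A B : {set T}) :
  ~~ [disjoint A & B] -> exists z, z \in A /\ z \in B.
Proof.
rewrite -setI_eq0 => /set0Pn [z]; rewrite inE => /andP [h1 h2]; by exists z.
Qed.

Lemma pencil_disj c l l' : l != l' -> [disjoint lineset c l & lineset c l'].
Proof.
move=> hl; apply: disjW => z; rewrite !mem_lineset; case: z => [P|m].
  move=> /andP [h1 h2] /andP [h3 _].
  by move/negP: h2; apply; apply/eqP; apply: pencil h1 h3; apply: slope_neq.
by move=> /eqP -> /eqP [e _]; move/negP: hl; apply; apply/eqP.
Qed.

Lemma line_meet c c' l l' z : z \in lineset c' l' -> z \in lineset c l ->
  ~~ lineF c' c (slope l') ->
  exists P, [/\ lineF c P (slope l), P != c, lineF c' P (slope l') & P != c'].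
Proof.
rewrite !mem_lineset; case: z => [P|m].
  by move=> /andP [h1 h2] /andP [h3 h4] _; exists P.
move=> /eqP -> /eqP e hn; exfalso; move/negP: hn; apply.
have el : l' = l by move: (congr1 fst e).
have et : t_of c' (slope l') = t_of c (slope l) by move: (congr1 snd e).
rewrite el in et *; by rewrite -onl_t et onl_t lineF_refl.
Qed.

Lemma cross_le1 c c' l' : ~~ lineF c' c (slope l') -> no_weighted_AP r p S ->
  (#|[set l | ~~ [disjoint lineset c' l' & lineset c l]]| <= 1)%N.
Proof.
move=> hn nap; apply/card_le1_eqP => l1 l2; rewrite !inE => /ndisjE [z1 [a1 b1]] /ndisjE [z2 [a2 b2]].
have [P1 [h1 n1 g1 m1]] := line_meet a1 b1 hn.
have [P2 [h2 n2 g2 m2]] := line_meet a2 b2 hn.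
apply/eqP; apply/negPn/negP => hl.
have s12 : slope l1 != slope l2 by apply: slope_neq; rewrite eq_sym.
have s1' : slope l1 != slope l'.
  apply/negP => /eqP e; move/negP: hn; apply; rewrite e in h1.
  by apply: (lineF_trans g1); rewrite lineF_sym.
have s2' : slope l' != slope l2.
  apply/negP => /eqP e; move/negP: hn; apply; rewrite -e in h2.
  by apply: (lineF_trans g2); rewrite lineF_sym.
have nP : P1 != P2.
  apply/negP => /eqP e; rewrite -e in h2; move/negP: n1; apply; apply/eqP.
  exact: pencil s12 h1 h2.
have l12 : lineF P1 P2 (slope l').
  by apply: (lineF_trans (Y:=c')) => //; rewrite lineF_sym.
apply: (tri _ nP _ h1 l12 h2 (slope_in _) (slope_in _) (slope_in _) s1' s12 s2' nap).
  by rewrite eq_sym.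
by rewrite eq_sym.
Qed.

Lemma card_lineset c l : (#|lineset c l| <= r)%N.
Proof.
rewrite /lineset cardsU1.
set A := [set P : cell | lineF c P (slope l) & P != c].
have hA : (#|A| < r)%N.
  set B := [set P : cell | lineF c P (slope l)].
  have hB : (#|B| <= r)%N.
    rewrite -(@card_in_imset _ _ fst).
      by apply: leq_trans (max_card _) _; rewrite card_ord.
    move=> P Q; rewrite !inE => /eqP hP /eqP hQ e.
    have er : rw P = rw Q by rewrite /rw e.
    apply: cell_eq => //.
    by apply: (addIr (- cl c)); rewrite hP hQ er.
  have : c |: A \subset B.
    apply/subsetP => z; rewrite !inE => /orP [/eqP -> | /andP [h _]] //.
    exact: lineF_refl.
  move/subset_leq_card; rewrite cardsU1 inE eqxx andbF /= => h.
  exact: leq_trans h hB.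
by apply: leq_trans (leq_add (leq_b1 _) (leq_imset_card _ A)) _; rewrite add1n.
Qed.

Lemma rho_sum (x : {ffun info_idx r p -> 'F_2}) l t :
  @rho r p S x l t = \sum_(P : cell | onl P (slope l) t) x P.
Proof.
rewrite /rho pair_big_dep /=.
by apply: eq_big => [[i j]|[i j] _].
Qed.

Lemma decode c l (x : {ffun info_idx r p -> 'F_2}) :
  let f := fun z => if z \in lineset c l then enc_arr r p S x z else 0 in
  f (inr (l, t_of c (slope l))) +
  \sum_(P : cell | lineF c P (slope l) && (P != c)) f (inl P) = x c.
Proof.
rewrite /= mem_lineset eqxx ffunE /= rho_sum.
rewrite [X in X + _](eq_bigl (fun P => lineF c P (slope l))); last by move=> P; rewrite -onl_t.
rewrite (bigD1 c) ?lineF_refl //=.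
rewrite [X in _ + X](eq_bigr (fun P => x P)); last first.
  by move=> P hP; rewrite mem_lineset hP ffunE.
by rewrite -addrA addrr_pchar2 ?addr0 //; apply: pchar_Fp.
Qed.

End Geo.

Lemma card_bigcup_le (I T : finType) (P : pred I) (B : I -> {set T}) :
  (#|\bigcup_(i | P i) B i| <= \sum_(i | P i) #|B i|)%N.
Proof.
apply: (big_ind2 (fun (A : {set T}) n => #|A| <= n)%N) => //.
  by rewrite cards0.
move=> A1 n1 A2 n2 h1 h2; rewrite cardsU; apply: leq_trans (leq_subr _ _) _.
exact: leq_add.
Qed.

Section Comb.
Variables (r p : nat) (S : {set 'I_p}).
Hypothesis hp : prime p.
Hypothesis hrp : (r <= p)%N.
Hypothesis nap : no_weighted_AP r p S.
Variable req : 'I_#|S| -> ('I_r * 'I_p).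
Local Notation LS := (@lineset r p S hp).
Local Notation sl := (@slope p S).

Definition first (j : 'I_#|S|) : bool :=
  [forall j' : 'I_#|S|, (j' < j)%N ==> (req j' != req j)].

Lemma first_occ j : exists2 j0, first j0 & req j0 = req j.
Proof.
case: (@arg_minnP _ j (fun j0 => req j0 == req j) val (eqxx _)) => j0 /eqP e hmin.
exists j0 => //; apply/forallP => j'; apply/implyP => hlt; apply/negP => /eqP e'.
have := hmin j'; rewrite e' e eqxx => /(_ isT).
by rewrite leqNgt hlt.
Qed.

Definition Inv (n : nat) (ch : 'I_#|S| -> option 'I_#|S|) : Prop :=
 [/\ forall j : 'I_#|S|, (j < n)%N -> (ch j == None) = first j,
     forall (j : 'I_#|S|) l, (j < n)%N -> ch j = Some l -> forall j', req j' != req j ->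
        ~~ lineF (req j) (req j') (sl l)
   & forall (j1 j2 : 'I_#|S|) l1 l2, (j1 < n)%N -> (j2 < n)%N -> j1 != j2 -> ch j1 = Some l1 ->
        ch j2 = Some l2 -> [disjoint LS (req j1) l1 & LS (req j2) l2]].

Lemma good_slope n ch (hn : (n < #|S|)%N) : Inv n ch -> ~~ first (Ordinal hn) ->
  exists l, (forall j', req j' != req (Ordinal hn) -> ~~ lineF (req (Ordinal hn)) (req j') (sl l)) /\
    (forall (j : 'I_#|S|) l', (j < n)%N -> ch j = Some l' -> [disjoint LS (req j) l' & LS (req (Ordinal hn)) l]).
Proof.
set jn := Ordinal hn.
case=> Ia Ib Ic nf.
pose B (j : 'I_#|S|) : {set 'I_#|S|} :=
  if req j == req jn then [set l | (j < n)%N && (ch j == Some l)]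
  else if first j then [set l | lineF (req jn) (req j) (sl l)]
  else if (j < n)%N then
    (match ch j with Some l' => [set l | ~~ [disjoint LS (req j) l' & LS (req jn) l]]
                | None => set0 end)
  else set0.
have hB : forall j, (#|B j| <= 1)%N.
  move=> j; rewrite /B.
  case: eqP => [e|ne].
    apply/card_le1_eqP => l1 l2; rewrite !inE => /andP [_ /eqP ->] /andP [_ /eqP [] //].
  case: ifP => fj.
    apply/card_le1_eqP => l1 l2; rewrite !inE => h1 h2.
    apply/eqP; apply/negPn/negP => hl.
    apply: ne; apply: (pencil hp hrp _ h2 h1).
    exact: slope_neq.
  case: ifP => jlt; last by rewrite cards0.
  case E: (ch j) => [l'|]; last by rewrite cards0.
  apply: cross_le1 => //.
  apply: (Ib j l' jlt E jn).
  by apply/eqP => e; apply: ne.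
have hcard : (#|\bigcup_(j | j != jn) B j| < #|S|)%N.
  apply: leq_ltn_trans (card_bigcup_le _ _) _.
  apply: (@leq_ltn_trans (\sum_(i | i != jn) 1)%N); first exact: leq_sum.
  rewrite sum1dep_card (_ : [set x | x != jn] = [set~ jn]); last by apply/setP => x; rewrite !inE.
  rewrite cardsC1 card_ord; have h0 : (0 < #|S|)%N := leq_ltn_trans (leq0n n) hn.
  lia.
have [l hl] : exists l, l \notin \bigcup_(j | j != jn) B j.
  have : (0 < #|~: \bigcup_(j | j != jn) B j|)%N.
    have := cardsC (\bigcup_(j | j != jn) B j); rewrite card_ord; lia.
  by case/card_gt0P => l; rewrite inE => hl; exists l.
have hl' : forall j, j != jn -> l \notin B j.
  by move=> j hj; apply: contra hl => h; apply/bigcupP; exists j.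
exists l; split.
  move=> j' ne'; case: (first_occ j') => j0 f0 e0.
  have hj0 : j0 != jn by apply: contraNneq ne' => e; rewrite -e0 e.
  have := hl' j0 hj0; rewrite /B e0 (negbTE ne') f0 inE.
  done.
move=> j l' hj E.
have hjn : j != jn by apply/negP => /eqP e; rewrite e /= ltnn in hj.
have := hl' j hjn; rewrite /B; case: eqP => [e|ne].
  rewrite inE hj E /= => hne; rewrite e.
  by apply: pencil_disj.
case: ifP => fj.
  by have := Ia j hj; rewrite E fj.
by rewrite hj E inE negbK.
Qed.

Lemma exists_ch : exists ch, Inv #|S| ch.
Proof.
suff H : forall n, (n <= #|S|)%N -> exists ch, Inv n ch by apply: H.
elim=> [_|n IH hn].
  exists (fun _ => None); split.
  - by move=> j; rewrite ltn0.
  - by move=> j l; rewrite ltn0.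
  - by move=> j1 j2 l1 l2; rewrite ltn0.
have [ch [Ia Ib Ic]] := IH (ltnW hn).
set jn := Ordinal hn.
have ltS : forall j : 'I_#|S|, (j < n.+1)%N -> j != jn -> (j < n)%N.
  move=> j h1 h2; rewrite ltnS leq_eqVlt in h1; case/orP: h1 => // /eqP e.
  by exfalso; move/negP: h2; apply; apply/eqP/val_inj.
case fn: (first jn).
  exists (fun j => if j == jn then None else ch j); split.
  - move=> j hj; case: ifP => [/eqP ->|/negbT ne]; first by rewrite fn.
    exact: Ia (ltS _ hj ne).
  - move=> j l hj; case: ifP => [//|/negbT ne].
    exact: Ib (ltS _ hj ne).
  - move=> j1 j2 l1 l2 h1 h2 ne; case: ifP => [//|/negbT n1]; case: ifP => [//|/negbT n2].
    exact: Ic (ltS _ h1 n1) (ltS _ h2 n2) ne.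
have [l [gB gC]] := good_slope (And3 Ia Ib Ic) (negbT fn).
exists (fun j => if j == jn then Some l else ch j); split.
- move=> j hj; case: ifP => [/eqP ->|/negbT ne]; first by rewrite fn.
  exact: Ia (ltS _ hj ne).
- move=> j l0 hj; case: ifP => [/eqP -> [<-]|/negbT ne]; first exact: gB.
  exact: Ib (ltS _ hj ne).
- move=> j1 j2 l1 l2 h1 h2 ne; case: ifP => [/eqP e1 [<-]|/negbT n1]; case: ifP => [/eqP e2|/negbT n2].
  + by rewrite e1 e2 eqxx in ne.
  + move=> E2; rewrite e1 disjoint_sym; exact: gC (ltS _ h2 n2) E2.
  + move=> E1 [<-]; rewrite e2; exact: gC (ltS _ h1 n1) E1.
  + exact: Ic (ltS _ h1 n1) (ltS _ h2 n2) ne.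
Qed.

End Comb.

Unset Implicit Arguments.
Set Strict Implicit.

Theorem theorem9 (r p k : nat) (S : {set 'I_p}) :
  (0 < r)%N -> (r <= p)%N -> prime p -> #|S| = k ->
  @no_weighted_AP r p S ->
  is_batch_code _ _ (enc_arr r p S) r k /\ #|@arr_code r p S| = (2 ^ (r * p))%N.
Proof.
move=> hr hrp hp hk nap; subst k; split.
- move=> req.
  have [ch [Ia Ib Ic]] := exists_ch hp hrp nap req.
  exists (fun j => match ch j with
                   | Some l => lineset hp (req j) l
                   | None => [set inl (req j)] end).
  split; [|split].
  + move=> j1 j2 ne.
    case E1: (ch j1) => [l1|]; case E2: (ch j2) => [l2|].
    * exact: Ic.
    * rewrite disjoint_sym disjoints1 mem_lineset negb_and negbK.
      case: (eqVneq (req j2) (req j1)) => [->|ne']; rewrite ?orbT //= orbF.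
      exact: Ib E1 _ ne'.
    * rewrite disjoints1 mem_lineset negb_and negbK.
      case: (eqVneq (req j1) (req j2)) => [->|ne']; rewrite ?orbT //= orbF.
      exact: Ib E2 _ ne'.
    * rewrite disjoints1 in_set1 /=.
      have f1 := Ia j1 (ltn_ord _); rewrite E1 eqxx in f1.
      have f2 := Ia j2 (ltn_ord _); rewrite E2 eqxx in f2.
      case: (ltngtP j1 j2) => h.
      - by move: (forallP (esym f2) j1); rewrite h.
      - by move: (forallP (esym f1) j2); rewrite h eq_sym.
      - by exfalso; move/negP: ne; apply; apply/eqP/val_inj.
  + move=> j; case: (ch j) => [l|]; first exact: card_lineset.
    by rewrite cards1.
  + move=> j; case E: (ch j) => [l|].
    * exists (fun f => (f (inr (l, t_of hp (req j) (slope l))) +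
         \sum_(P : 'I_r * 'I_p | lineF (req j) P (slope l) && (P != req j)) f (inl P))%R).
      move=> x; exact: decode.
    * exists (fun f => f (inl (req j))).
      by move=> x; rewrite in_set1 eqxx ffunE.
- rewrite /arr_code card_imset.
    by rewrite card_ffun card_Fp // /info_idx card_prod !card_ord.
  move=> x y e; apply/ffunP => ij.
  by move/ffunP: e => /(_ (inl ij)); rewrite !ffunE.
Qed.
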